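(* Let $k\ge2$ be the cache size and $N\ge k+1$. For the star access graph $S_N$ on $N$ vertices, \[-\frac12+\frac1{2(k-1)}\le\mathrm{Min}^{S_N}(\mathrm{FIFO},\mathrm{LRU})\le-\frac12+\frac1{2(k-1)}+\frac1{2k(k-1)}.\]
   Context: Paging: a cache holds at most $k$ pages and is initially empty. A request to a page in the cache is a hit; otherwise it is a fault, the page is brought into the cache, evicting a page first if the cache is full. $\mathcal{A}(I)$ is the number of faults of $\mathcal{A}$ on request sequence $I$. LRU evicts the least recently requested cached page; FIFO evicts the cached page that entered the cache earliest. The star $S_N$ has a central vertex adjacent to $N-1$ leaves, with no other edges. Access graph: a graph $G$ whose vertices are the pages; a request sequence respects $G$ if any two consecutive requests are identical or adjacent in $G$; $L(G)$ is the set of such sequences. $\mathrm{Min}_{\mathcal{A},\mathcal{B}}(n,G)=\min\{\mathcal{A}(I)-\mathcal{B}(I): I\in L(G),|I|=n\}$ and $\mathrm{Min}^G(\mathcal{A},\mathcal{B})=\liminf_{n\to\infty}\mathrm{Min}_{\mathcal{A},\mathcal{B}}(n,G)/n$. *)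

(* Defs.v *)
From HB Require Import structures.
From mathcomp Require Import all_boot all_order all_algebra.
From mathcomp Require Import all_classical all_reals all_analysis.
Set Implicit Arguments. Unset Strict Implicit. Unset Printing Implicit Defensive.
Import Order.TTheory GRing.Theory Num.Theory.

(* A cache is a sequence of pages.  For FIFO it is ordered by time of entry
   into the cache (head = earliest); for LRU it is ordered by time of last
   request (head = least recently requested). *)
Section Paging.
Variable T : eqType.
Variable k : nat.

Definition fault_insert (c : seq T) (x : T) : seq T :=
  if size c < k then rcons c x else rcons (behead c) x.

Definition fifo_step (c : seq T) (x : T) : seq T * bool :=
  if x \in c then (c, false) else (fault_insert c x, true).

Definition lru_step (c : seq T) (x : T) : seq T * bool :=
  if x \in c then (rcons (rem x c) x, false) else (fault_insert c x, true).

Fixpoint run_faults (step : seq T -> T -> seq T * bool) (c : seq T) (s : seq T)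
  : nat :=
  match s with
  | [::] => 0
  | x :: s' => let: (c', f) := step c x in f + run_faults step c' s'
  end.

Definition FIFO (s : seq T) : nat := run_faults fifo_step [::] s.
Definition LRU (s : seq T) : nat := run_faults lru_step [::] s.
End Paging.

Definition star (N : nat) : rel 'I_N :=
  fun x y => (x != y) && ((val x == 0) || (val y == 0)).

Definition respects (T : eqType) (G : rel T) (s : seq T) : bool :=
  if s is x :: s' then path (fun a b => (a == b) || G a b) x s' else true.

(* minimum of f over the (finite) set {t | P t}; 0 if that set is empty *)
Definition fmin (X : finType) (P : pred X) (f : X -> int) : int :=
  if [pick t | P t] is Some t0 then f (Order.arg_min t0 P f) else 0.

Definition MinFL (k N n : nat) : int :=
  fmin (fun t : n.-tuple 'I_N => respects (@star N) t)
       (fun t => (Posz (FIFO k (val t)) - Posz (LRU k (val t)))%R).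

(* Main.v *)
Require Import Defs.
From mathcomp Require Import all_boot all_order all_algebra.
From mathcomp Require Import all_classical all_reals all_analysis.
From mathcomp Require Import zify ring lra.

Module PagingAux.
Set Implicit Arguments. Unset Strict Implicit. Unset Printing Implicit Defensive.

Section SeqAux.
Variable T : eqType.
Lemma rem_cat' (x : T) s1 s2 :
  rem x (s1 ++ s2) = if x \in s1 then rem x s1 ++ s2 else s1 ++ rem x s2.
Proof.
elim: s1 => [|y s1 IH] //=; rewrite in_cons (eq_sym x y); case: (y =P x) => [->|ne] /=.
  by [].
by rewrite IH; case: (x \in s1).
Qed.

Lemma size_rcons_rem (x : T) s : x \in s -> size (rcons (rem x s) x) = size s.
Proof. by move=> h; rewrite size_rcons size_rem // prednK // lt0n size_eq0; case: s h. Qed.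

Lemma rem_rcons_last (x : T) s : x \notin s -> rem x (rcons s x) = s.
Proof. by move=> h; rewrite -cats1 rem_cat' (negbTE h) /= eqxx cats0. Qed.
End SeqAux.

Lemma run_cons (T : eqType) (step : seq T -> T -> seq T * bool) c x s :
  run_faults step c (x :: s) = (step c x).2 + run_faults step (step c x).1 s.
Proof. by rewrite /=; case: (step c x). Qed.

Section Lower.
Variables (T : eqType) (k : nat) (isc : pred T).
Hypothesis hk : 1 < k.
Hypothesis iscU : forall x y, isc x -> isc y -> x = y.

Definition adj (a b : T) := (a == b) || ((a != b) && (isc a || isc b)).

Definition Phi (p : T) (Q D : seq T) : nat :=
  2 * ((k-1) - minn (count (predC isc) Q) (k-1)) + (if isc p then k-2 else 0)
  + (if has isc D then 0 else 2).

Definition Inv (C P Q : seq T) (p : T) :=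
  [/\ uniq C, size C <= k, uniq (P ++ Q), size (P ++ Q) <= k & p \in C] /\
  [/\ exists Q0, Q = rcons Q0 p, (forall y, isc y -> y \in C -> y \in P ++ Q),
      (~~ has isc (P ++ Q) -> P ++ Q = [:: p]) & all (mem C) Q].

Lemma fi_props (c : seq T) x : uniq c -> size c <= k -> x \notin c ->
  [/\ uniq (fault_insert k c x), size (fault_insert k c x) <= k,
      x \in fault_insert k c x &
      forall y, y \in fault_insert k c x -> (y == x) || (y \in c)].
Proof.
move=> u sz xc; rewrite /fault_insert; case: ltnP => h.
  rewrite rcons_uniq xc u size_rcons h mem_rcons in_cons eqxx; split => // y.
  by rewrite mem_rcons in_cons.
have hb : {subset behead c <= c} by apply: mem_behead.
rewrite rcons_uniq size_rcons size_behead mem_rcons in_cons eqxx.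
split => //.
- rewrite (contra (@hb x)) //; by case: c u {sz h xc hb} => //= a c /andP[].
- by case: (size c) sz h => //= n; lia.
- by move=> y; rewrite mem_rcons in_cons => /orP[->|/hb ->]; rewrite ?orbT.
Qed.


Lemma uniq_D_notin (P Q0 : seq T) p : uniq (P ++ rcons Q0 p) -> p \notin P ++ Q0.
Proof. by rewrite -rcons_cat rcons_uniq => /andP[]. Qed.

Lemma count_leaf_lt (Q : seq T) p : isc p -> p \in Q ->
  count (predC isc) Q < size Q.
Proof.
move=> cp pQ; rewrite -(count_predC isc Q).
have : 0 < count isc Q by rewrite -has_count; apply/hasP; exists p.
lia.
Qed.

Lemma lru_hit_decomp (P Q : seq T) x : uniq (P ++ Q) -> x \in P ++ Q ->
  exists P' Q0', [/\ rcons (rem x (P ++ Q)) x = P' ++ rcons Q0' x,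
     {subset rcons Q0' x <= x :: Q},
     count (predC isc) Q <= count (predC isc) (rcons Q0' x) &
     (isc x -> count (predC isc) (rcons Q0' x) = count (predC isc) Q)].
Proof.
move=> u; rewrite mem_cat; case: (boolP (x \in P)) => xP /= xQ.
  exists (rem x P), Q; rewrite rem_cat' xP rcons_cat; split => //.
  - by move=> y; rewrite mem_rcons.
  - by rewrite -cats1 count_cat; lia.
  - by move=> cx; rewrite -cats1 count_cat /= cx; lia.
exists P, (rem x Q); rewrite rem_cat' (negbTE xP) rcons_cat; split => //.
- move=> y; rewrite mem_rcons !in_cons => /orP[->//|/mem_rem ->]; by rewrite orbT.
- have /permP -> := perm_to_rem xQ.
  rewrite -cats1 count_cat /=; lia.
- move=> _; have /permP -> := perm_to_rem xQ.
  rewrite -cats1 count_cat /=; lia.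
Qed.

Lemma step_ok C P Q p x : Inv C P Q p -> adj p x ->
  exists C' P' Q', [/\ (fifo_step k C x).1 = C', (lru_step k (P++Q) x).1 = P' ++ Q',
    Inv C' P' Q' x &
    2*(k-1)*(lru_step k (P++Q) x).2 + Phi x Q' (P'++Q') <=
      2*(k-1)*(fifo_step k C x).2 + (k-2) + Phi p Q (P++Q)].
Proof.
move=> [[uC sC uD sD pC] [[Q0 eQ] I5 I6 QC]] apx.
have pQ : p \in Q by rewrite eQ mem_rcons mem_head.
have pD : p \in P ++ Q by rewrite mem_cat pQ orbT.
have Dl : P ++ Q = rcons (P ++ Q0) p by rewrite eQ rcons_cat.
have pnD0 : p \notin P ++ Q0 by apply: uniq_D_notin; rewrite -eQ.
case: (boolP (x \in C)) => xC.
- have fE : fifo_step k C x = (C, false) by rewrite /fifo_step xC.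
  case: (eqVneq x p) => [exp | xp].
  + subst x.
    have lE : lru_step k (P ++ Q) p = (P ++ Q, false).
      by rewrite /lru_step pD Dl rem_rcons_last.
    exists C, P, Q; rewrite fE lE /=; split => //.
      by split; [split | split => //; exists Q0].
    lia.
  + have cpx : isc p || isc x.
      by move: apx; rewrite /adj eq_sym (negbTE xp) /=.
    case: (boolP (x \in P ++ Q)) => xD.
    * have lE : lru_step k (P ++ Q) x = (rcons (rem x (P ++ Q)) x, false).
        by rewrite /lru_step xD.
      have [P' [Q0' [eD' sQ' cQ' cQx]]] := lru_hit_decomp uD xD.
      have memD' : (P' ++ rcons Q0' x) =i (P ++ Q).
        move=> y; rewrite -eD' mem_rcons in_cons.
        case: (eqVneq y x) => [->|yx] /=; first by rewrite xD.
        by rewrite (mem_rem_uniq _ uD) inE yx.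
      have hasE : has isc (P' ++ rcons Q0' x) = has isc (P ++ Q).
        by apply: eq_has_r.
      exists C, P', (rcons Q0' x); rewrite fE lE /=; split => //.
        split; split => //.
        - by rewrite -eD' rcons_uniq mem_rem_uniqF // rem_uniq.
        - by rewrite -eD' size_rcons_rem.
        - by exists Q0'.
        - by move=> y cy yC; rewrite memD'; apply: I5.
        - rewrite hasE => /I6 eD; move: xD; rewrite eD inE => /eqP exp.
          by rewrite exp eqxx in xp.
        - apply/allP => y /sQ'; rewrite in_cons => /orP[/eqP->//|yQ].
          exact: (allP QC).
      rewrite /Phi hasE.
      case cx: (isc x).
      * have ncp : ~~ isc p.
          by apply/negP => cp; move: xp; rewrite (iscU cx cp) eqxx.
        rewrite (negbTE ncp) (cQx cx) /=.
        move: (minn _ _) (if has _ _ then _ else _) => M Z.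
        clear; lia.
      * have cp : isc p by rewrite cx orbF in cpx.
        rewrite cp /=.
        move: (count _ (rcons Q0' x)) (count _ Q) cQ' (if has _ _ then _ else _) => m1 m0 h Z.
        clear -h; lia.
    * have lE : lru_step k (P ++ Q) x = (fault_insert k (P ++ Q) x, true).
        by rewrite /lru_step (negbTE xD).
      have ncx : ~~ isc x.
        by apply/negP => cx; move: xD; rewrite I5.
      have cp : isc p by rewrite (negbTE ncx) orbF in cpx.
      have xQ : x \notin Q by move: xD; rewrite mem_cat negb_or => /andP[].
      have uQ : uniq Q by move: uD; rewrite cat_uniq => /and3P[].
      have szQ : size Q < k.
        have : size (x :: Q) <= size C.
          apply: uniq_leq_size; first by rewrite /= xQ uQ.
          by move=> y; rewrite in_cons => /orP[/eqP->//|]; apply: (allP QC).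
        by move=> /= h; apply: leq_trans sC.
      have [P' eD'] : exists P', fault_insert k (P ++ Q) x = P' ++ rcons Q x.
        rewrite /fault_insert; case: ltnP => h.
          by exists P; rewrite rcons_cat.
        case: P {Dl pnD0 I5 I6 uD sD pD xD lE} h => [|a P1] h.
          by move: h; rewrite /= => h; move: (size Q) szQ h => a; clear; lia.
        by exists P1; rewrite /= rcons_cat.
      have [uD' sD' _ _] := fi_props uD sD xD.
      have pD' : p \in P' ++ rcons Q x by rewrite mem_cat mem_rcons in_cons pQ !orbT.
      have hD' : has isc (P' ++ rcons Q x) by apply/hasP; exists p.
      have hD : has isc (P ++ Q) by apply/hasP; exists p.
      exists C, P', (rcons Q x); rewrite fE lE /=; split => //.
        split; split => //.
        - by rewrite -eD'.
        - by rewrite -eD'.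
        - by exists Q.
        - by move=> y cy _; rewrite (iscU cy cp).
        - by rewrite hD'.
        - by apply/allP => y; rewrite mem_rcons in_cons => /orP[/eqP->//|];
            apply: (allP QC).
      have cQ := count_leaf_lt cp pQ.
      rewrite /Phi hD hD' cp (negbTE ncx) -cats1 count_cat /= ncx.
      have szQ' : count (predC isc) Q <= k - 2.
        by move: (count _ Q) (size Q) cQ szQ => a b h1 h2; clear -h1 h2; lia.
      move: (count _ Q) szQ' => m h; clear -h hk; lia.
- have fE : fifo_step k C x = (fault_insert k C x, true)
    by rewrite /fifo_step (negbTE xC).
  have xp : x != p by apply: contraNneq xC => ->.
  have cpx : isc p || isc x.
    by move: apx; rewrite /adj eq_sym (negbTE xp) /=.
  have [uC' sC' xC' _] := fi_props uC sC xC.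
  have [P' [eD' uD' sD' pD'] ] : exists P', [/\ (lru_step k (P ++ Q) x).1 = P' ++ [:: x],
      uniq (P' ++ [:: x]), size (P' ++ [:: x]) <= k & (~~ isc x -> p \in P')].
    case: (boolP (x \in P ++ Q)) => xD.
      exists (rem x (P ++ Q)); rewrite /lru_step xD /= cats1; split => //.
      - by rewrite rcons_uniq mem_rem_uniqF // rem_uniq.
      - by rewrite size_rcons_rem.
      - by move=> _; apply: rem_mem; rewrite // eq_sym.
    have [u1 s1 _ _] := fi_props uD sD xD.
    exists (if size (P ++ Q) < k then P ++ Q else behead (P ++ Q)).
    have -> : (lru_step k (P ++ Q) x).1 =
       (if size (P ++ Q) < k then P ++ Q else behead (P ++ Q)) ++ [:: x].
      by rewrite /lru_step (negbTE xD) /= cats1 /fault_insert; case: ifP.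
    split => //.
    - by rewrite cats1; move: u1; rewrite /fault_insert; case: ifP.
    - by rewrite cats1; move: s1; rewrite /fault_insert; case: ifP.
    move=> _; case: ltnP => h //.
    move: h; rewrite Dl; case: (P ++ Q0) => [|a s] /=.
      by move=> h; clear -h hk; lia.
    by move=> _; rewrite mem_rcons mem_head.
  have hD' : has isc (P' ++ [:: x]).
    case cx: (isc x); first by apply/hasP; exists x; rewrite ?mem_cat ?mem_head ?orbT.
    have cp : isc p by rewrite cx orbF in cpx.
    by apply/hasP; exists p; rewrite // mem_cat pD' // cx.
  exists (fault_insert k C x), P', [:: x]; rewrite fE eD' /=; split => //.
    split; split => //.
    - by exists [::].
    - by move=> y cy _; move/hasP: hD' => [z zD cz]; rewrite (iscU cy cz).
    - by rewrite hD'.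
    - by rewrite /= xC'.
  rewrite /Phi hD' /=.
  case cx: (isc x) => /=.
  + case: (boolP (x \in P ++ Q)) => xD.
      have -> : (lru_step k (P ++ Q) x).2 = false by rewrite /lru_step xD.
      move: (Phi p Q (P ++ Q)) => F; clear; lia.
    have -> : (lru_step k (P ++ Q) x).2 = true by rewrite /lru_step (negbTE xD).
    have nh : ~~ has isc (P ++ Q).
      by apply/hasP => -[z zD cz]; move: xD; rewrite (iscU cx cz) zD.
    have eD := I6 nh.
    have hs : size P + (size Q0).+1 = 1.
      by move: (congr1 size eD); rewrite eQ size_cat size_rcons.
    have eP : P = [::] by apply: size0nil; move: hs; clear; lia.
    have eQ0 : Q0 = [::] by apply: size0nil; move: hs; clear; lia.
    have ncp : isc p = false.
      by apply/negbTE/negP => cp; move/negP: nh; apply; apply/hasP; exists p.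
    rewrite (negbTE nh) eQ eQ0 /= ncp /=.
    have -> : minn 1 (k - 1) = 1 by clear -hk; lia.
    clear -hk; lia.
  + have cp : isc p by rewrite cx orbF in cpx.
    rewrite cp.
    have -> : minn 1 (k - 1) = 1 by clear -hk; lia.
    move: (lru_step k (P ++ Q) x).2 (minn _ _) (if has _ _ then _ else _) => b M Z.
    clear -hk; case: b => /=; lia.
Qed.

Lemma Phi_le p Q D : Phi p Q D <= 3 * k.
Proof.
rewrite /Phi; move: (minn _ _) => M.
case: (isc p); case: (has isc D) => /=.
all: clear -hk; lia.
Qed.

Lemma lower_main s : forall C P Q p, Inv C P Q p -> path adj p s ->
  2*(k-1) * run_faults (lru_step k) (P ++ Q) s <=
  2*(k-1) * run_faults (fifo_step k) C s + (k-2) * size s + Phi p Q (P ++ Q).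
Proof.
elim: s => [|x s IH] C P Q p I /=.
  by move=> _; rewrite !muln0.
move=> /andP[a ps].
have [C' [P' [Q' [e1 e2 I' ineq]]]] := step_ok I a.
move: e1 e2 ineq.
case: (fifo_step k C x) => [c1 b1]; case: (lru_step k (P++Q) x) => [d1 b2] /= e1 e2 ineq.
subst c1 d1.
have := IH _ _ _ _ I' ps.
rewrite !mulnDr mulnS.
move: (2 * (k-1) * b2) (2 * (k-1) * b1) (2 * (k - 1) * run_faults (lru_step k) (P' ++ Q') s)
  (2 * (k - 1) * run_faults (fifo_step k) C' s) ((k - 2) * size s) (Phi x Q' (P' ++ Q'))
  (Phi p Q (P ++ Q)) ineq => a1 a2 a3 a4 a5 a6 a7 h1 h2.
clear -h1 h2; lia.
Qed.

Lemma lower_seq x s : path adj x s ->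
  2*(k-1) * LRU k (x :: s) <= 2*(k-1) * FIFO k (x :: s) + (k-2) * size (x :: s) + 3 * k.
Proof.
move=> ps; rewrite /LRU /FIFO !run_cons.
have e : fault_insert k [::] x = [:: x] by rewrite /fault_insert /= (ltn_trans _ hk).
have hF : fifo_step k [::] x = ([:: x], true) by rewrite /fifo_step /= e.
have hL : lru_step k [::] x = ([:: x], true) by rewrite /lru_step /= e.
rewrite hF hL; cbn [fst snd nat_of_bool size].
have I : Inv [:: x] [::] [:: x] x.
  split; split.
  - by [].
  - by rewrite /=; clear -hk; lia.
  - by [].
  - by rewrite /=; clear -hk; lia.
  - by rewrite inE.
  - by exists [::].
  - by move=> y _.
  - by [].
  - by rewrite /= inE eqxx.
have := lower_main I ps.
have := Phi_le x [:: x] [:: x].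
rewrite /= !mulnDr !mulnS.
move: (2 * (k - 1) * run_faults (lru_step k) [:: x] s)
  (2 * (k - 1) * run_faults (fifo_step k) [:: x] s) ((k - 2) * size s) (Phi x [:: x] [:: x])
  => a3 a4 a5 a6 h1 h2.
clear -h1 h2; lia.
Qed.

End Lower.


Definition fin (T : eqType) (step : seq T -> T -> seq T * bool) c s :=
  foldl (fun c x => (step c x).1) c s.

Lemma run_cat (T : eqType) (step : seq T -> T -> seq T * bool) c s1 s2 :
  run_faults step c (s1 ++ s2) =
  run_faults step c s1 + run_faults step (fin step c s1) s2.
Proof.
elim: s1 c => [|x s1 IH] c //=.
by case: (step c x) => c' b; rewrite IH addnA.
Qed.

Lemma fin_cons (T : eqType) (step : seq T -> T -> seq T * bool) c x s :
  fin step c (x :: s) = fin step (step c x).1 s.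
Proof. by []. Qed.

Lemma fin_cat (T : eqType) (step : seq T -> T -> seq T * bool) c s1 s2 :
  fin step c (s1 ++ s2) = fin step (fin step c s1) s2.
Proof. exact: foldl_cat. Qed.

Lemma rem_mid (T : eqType) (x : T) s1 s2 : x \notin s1 -> rem x (s1 ++ x :: s2) = s1 ++ s2.
Proof. by move=> h; rewrite rem_cat' (negbTE h) /= eqxx. Qed.

Lemma iota_rcons m n : rcons (iota m n) (m + n) = iota m n.+1.
Proof. by rewrite -cats1 -addn1 iotaD. Qed.

Lemma iota1_pred n : 0 < n -> iota 1 n = rcons (iota 1 n.-1) n.
Proof. by case: n => // n _; rewrite -iota_rcons add1n. Qed.

Definition pl (xs : seq nat) : seq nat := flatten [seq [:: x; 0] | x <- xs].

Lemma pl_cons x xs : pl (x :: xs) = [:: x; 0] ++ pl xs.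
Proof. by []. Qed.

Lemma pl_cat a b : pl (a ++ b) = pl a ++ pl b.
Proof. by rewrite /pl map_cat flatten_cat. Qed.

Lemma size_pl xs : size (pl xs) = 2 * size xs.
Proof. elim: xs => [|x xs IH] //=; rewrite IH; lia. Qed.

Lemma traject_map (f : nat -> nat) x n : traject f x n = [seq iter i f x | i <- iota 0 n].
Proof.
elim: n x => [|n IH] x //=; rewrite IH.
have -> : iota 1 n = map (addn 1) (iota 0 n) by rewrite -iotaDl.
rewrite -map_comp; congr (_ :: _).
by apply: eq_map => i /=; rewrite -iterSr.
Qed.

Section Up.
Variable k : nat.
Hypothesis hk : 1 < k.

Definition dec (x : nat) := if x == 1 then k else x.-1.

Lemma iter_dec j i : 1 <= j <= k -> i <= k ->
  iter i dec j = if i < j then j - i else j + k - i.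
Proof.
move=> hj; elim: i => [|i IH] hi /=.
  by case: ifP => h; move: hj h; clear; lia.
rewrite IH; last by move: hi; clear; lia.
rewrite /dec; case: (ltnP i j) => h1; case: (ltnP i.+1 j) => h2;
  case: eqP => h3; move: hj hi hk h1 h2 h3; clear; lia.
Qed.

Lemma iter_dec_k x : 1 <= x <= k -> iter k dec x = x.
Proof. by move=> hx; rewrite iter_dec // ?ltnNge; case: ifP; move: hx; clear; lia. Qed.

Lemma iter_dec_mk m x : 1 <= x <= k -> iter (m * k) dec x = x.
Proof.
move=> hx; elim: m => [|m IH] //; rewrite mulSn iterD IH iter_dec_k //.
Qed.

Lemma dec_range x : 1 <= x <= k -> 1 <= dec x <= k.
Proof. rewrite /dec; case: eqP; move: hk; clear; lia. Qed.

Definition Ff j := iota j.+1 (k - j) ++ iota 0 j.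

Lemma mem_Ff j y : j <= k -> (y \in Ff j) = (y <= k) && (y != j).
Proof. move=> hj; rewrite mem_cat !mem_iota; move: hj; clear; lia. Qed.

Lemma size_Ff j : j <= k -> size (Ff j) = k.
Proof. move=> hj; rewrite size_cat !size_iota; move: hj; clear; lia. Qed.

Lemma fifo_hits (C s : seq nat) : all (mem C) s ->
  run_faults (fifo_step k) C s = 0 /\ fin (fifo_step k) C s = C.
Proof.
elim: s => [|x s IH] //= /andP[xC aC].
by rewrite /fifo_step xC /=; apply: IH.
Qed.

Lemma Ff_fault j : j <= k -> fifo_step k (Ff j) j = (Ff (if j == k then 0 else j.+1), true).
Proof.
move=> hj; rewrite /fifo_step mem_Ff // eqxx andbF /fault_insert size_Ff // ltnn.
congr (_, _); case: eqP => [ejk|njk].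
  subst j; rewrite /Ff subnn /= subn0 cats0.
  have -> : k = (k.-1).+1 by move: hk; clear; lia.
  by rewrite /= -(add1n k.-1) iota_rcons.
rewrite /Ff.
have -> : k - j = (k - j.+1).+1 by move: hj njk; clear; lia.
by rewrite /= rcons_cat -{3}(add0n j) iota_rcons.
Qed.

Lemma all_pl (C xs : seq nat) : 0 \in C -> all (mem C) xs -> all (mem C) (pl xs).
Proof.
move=> h0; elim: xs => [|x xs IH] //= /andP[xC aC].
by rewrite xC h0 IH.
Qed.

Lemma fifo_seg j : 1 <= j <= k ->
  run_faults (fifo_step k) (Ff j) (pl (traject dec j (k-1))) = 1 + (j == k) /\
  fin (fifo_step k) (Ff j) (pl (traject dec j (k-1))) = Ff (if j == k then 1 else j.+1).
Proof.
move=> hj.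
have e : k - 1 = (k-2).+1 by move: hk; clear; lia.
have hjk : j <= k by move: hj; clear; lia.
rewrite e trajectS pl_cons run_cat.
set s := pl (traject dec (dec j) (k-2)).
have memS t : 1 <= t <= k ->
    (forall i, i < k - 2 -> ((if i.+1 < j then j - i.+1 else j + k - i.+1) <= k) &&
        ((if i.+1 < j then j - i.+1 else j + k - i.+1) != t)) -> all (mem (Ff t)) s.
  move=> ht hv; apply: all_pl; first by rewrite mem_Ff; move: ht; clear; lia.
  apply/allP => y /trajectP [i hi ->]; rewrite -iterSr iter_dec //; last first.
    by move: hi hk; clear; lia.
  by rewrite -[mem _ _]/(_ \in Ff t) mem_Ff ?hv //; move: ht; clear; lia.
rewrite /= Ff_fault //.
case: (eqVneq j k) => [ejk | njk] /=.
- have h0 : fifo_step k (Ff 0) 0 = (Ff 1, true).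
    have := Ff_fault (j := 0) (ltnW (ltnW hk)).
    by have -> : (0 == k) = false by move: hk; clear; lia.
  have hm : all (mem (Ff 1)) s.
    apply: memS; first by move: hk; clear; lia.
    move=> i hi; rewrite ejk; case: ifP; move: hi hk; clear; lia.
  have [r1 r2] := fifo_hits hm.
  by rewrite h0 /= r1 r2.
- have h0 : fifo_step k (Ff j.+1) 0 = (Ff j.+1, false).
    by rewrite /fifo_step mem_Ff; move: njk hjk; clear; try lia.
  have hm : all (mem (Ff j.+1)) s.
    apply: memS; first by move: njk hjk; clear; lia.
    move=> i hi; case: ifP; move: hi hk njk hj; clear; lia.
  have [r1 r2] := fifo_hits hm.
  by rewrite h0 /= r1 r2.
Qed.

Lemma iter_dec_km1 j : 1 <= j <= k -> iter (k-1) dec j = if j == k then 1 else j.+1.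
Proof.
move=> hj; rewrite iter_dec //; last by move: hk; clear; lia.
case: ifP; case: eqP; move: hj hk; clear; lia.
Qed.

Lemma fifo_segs m j : 1 <= j -> j + m <= k ->
  run_faults (fifo_step k) (Ff j) (pl (traject dec j (m * (k-1)))) = m /\
  fin (fifo_step k) (Ff j) (pl (traject dec j (m * (k-1)))) = Ff (j + m).
Proof.
elim: m j => [|m IH] j hj hjm; first by rewrite mul0n addn0.
have hj' : 1 <= j <= k by move: hj hjm; clear; lia.
have njk : (j == k) = false by move: hj hjm; clear; lia.
rewrite mulSn trajectD pl_cat run_cat iter_dec_km1 // njk.
have [r1 r2] := fifo_seg hj'; rewrite njk in r1 r2.
rewrite r1 r2.
have hjm' : j.+1 + m <= k by move: hjm; clear; lia.
have [r3 r4] := IH j.+1 isT hjm'.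
split; first by rewrite r3.
by rewrite fin_cat r2 r4 addSnnS.
Qed.

Lemma fifo_period :
  run_faults (fifo_step k) (Ff k) (pl (traject dec k (k * (k-1)))) = k.+1 /\
  fin (fifo_step k) (Ff k) (pl (traject dec k (k * (k-1)))) = Ff k.
Proof.
have hkk : 1 <= k <= k by move: hk; clear; lia.
have -> : k * (k - 1) = (k - 1) + (k - 1) * (k - 1).
  by rewrite -mulSn; congr (_ * _); move: hk; clear; lia.
rewrite trajectD pl_cat run_cat iter_dec_km1 // eqxx.
have [r1 r2] := fifo_seg hkk; rewrite eqxx in r1 r2.
have h1k : 1 + (k - 1) <= k by move: hk; clear; lia.
have [r3 r4] := @fifo_segs (k-1) 1 isT h1k.
rewrite r1 r2 r3 fin_cat r2 r4.
by split; [move: hk; clear; lia | congr Ff; move: hk; clear; lia].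
Qed.

Lemma fifo_periods R :
  run_faults (fifo_step k) (Ff k) (pl (traject dec k (R * (k * (k-1))))) = R * k.+1 /\
  fin (fifo_step k) (Ff k) (pl (traject dec k (R * (k * (k-1))))) = Ff k.
Proof.
have [r1 r2] := fifo_period.
elim: R => [|R [IH1 IH2]] //.
have ek : iter (k * (k - 1)) dec k = k.
  by rewrite mulnC iter_dec_mk //; move: hk; clear; lia.
rewrite mulSn trajectD pl_cat run_cat ek r1 r2 IH1 fin_cat r2 IH2.
by rewrite mulSn.
Qed.

Definition W x := [seq iter i dec x | i <- iota 1 (k-1)].

Lemma lru_pair x : 1 <= x <= k ->
  run_faults (lru_step k) (rcons (W x) 0) [:: x; 0] = 1 /\
  fin (lru_step k) (rcons (W x) 0) [:: x; 0] = rcons (W (dec x)) 0.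
Proof.
move=> hx.
have ek : k - 1 = (k - 2).+1 by move: hk; clear; lia.
set W' := [seq iter i dec x | i <- iota 2 (k-2)].
have eW : W x = dec x :: W' by rewrite /W ek.
have eWd : W (dec x) = rcons W' x.
  rewrite /W /W' ek -iota_rcons map_rcons -iterSr.
  have -> : (1 + (k - 2)).+1 = k by move: hk; clear; lia.
  rewrite iter_dec_k //; congr rcons.
  have -> : iota 2 (k-2) = map (addn 1) (iota 1 (k-2)) by rewrite -iotaDl.
  by rewrite -map_comp; apply: eq_map => i /=; rewrite -iterSr.
have hWx : forall y, y \in W x -> (y != x) && (y != 0).
  move=> y /mapP [i]; rewrite mem_iota => hi ->; rewrite iter_dec //; last first.
    by move: hi hk; clear; lia.
  by case: ifP; move: hi hx hk; clear; lia.
have xnW : x \notin rcons (W x) 0.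
  rewrite mem_rcons in_cons negb_or; apply/andP; split; first by move: hx; clear; lia.
  by apply/negP => /hWx; rewrite eqxx.
have z0 : 0 \notin W'.
  by apply/negP => h; move: (hWx 0); rewrite eW in_cons h orbT eqxx andbF => /(_ isT).
have s1 : size (rcons (W x) 0) = k by rewrite size_rcons size_map size_iota; move: hk; clear; lia.
have st1 : lru_step k (rcons (W x) 0) x = (rcons (rcons W' 0) x, true).
  by rewrite /lru_step (negbTE xnW) /fault_insert s1 ltnn eW.
have st2 : lru_step k (rcons (rcons W' 0) x) 0 = (rcons (rcons W' x) 0, false).
  rewrite /lru_step mem_rcons in_cons mem_rcons mem_head orbT.
  by rewrite -!cats1 -catA /= rem_mid.
by rewrite /= st1 /= st2 /= eWd.
Qed.

Lemma lru_run n x : 1 <= x <= k ->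
  run_faults (lru_step k) (rcons (W x) 0) (pl (traject dec x n)) = n /\
  fin (lru_step k) (rcons (W x) 0) (pl (traject dec x n)) = rcons (W (iter n dec x)) 0.
Proof.
elim: n x => [|n IH] x hx //.
rewrite trajectS pl_cons run_cat.
have [r1 r2] := lru_pair hx.
have [r3 r4] := IH _ (dec_range hx).
rewrite r1 r2 r3 fin_cat r2 r4 iterSr.
by split.
Qed.

Lemma fifoA j m : 1 <= j -> j + m <= k ->
  run_faults (fifo_step k) (iota 0 j) (pl (iota j m)) = m /\
  fin (fifo_step k) (iota 0 j) (pl (iota j m)) = iota 0 (j + m).
Proof.
elim: m j => [|m IH] j hj hjm; first by rewrite addn0.
have st1 : fifo_step k (iota 0 j) j = (iota 0 j.+1, true).
  rewrite /fifo_step mem_iota ltnn andbF /fault_insert size_iota.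
  have -> : j < k by move: hjm; clear; lia.
  by rewrite -{2}(add0n j) iota_rcons.
have st2 : fifo_step k (iota 0 j.+1) 0 = (iota 0 j.+1, false).
  by rewrite /fifo_step mem_iota.
rewrite (_ : iota j m.+1 = j :: iota j.+1 m) // pl_cons run_cat /= st1 /=.
change (0 :: iota 1 j) with (iota 0 j.+1).
have hjm' : j.+1 + m <= k by move: hjm; clear; lia.
have [r3 r4] := IH j.+1 isT hjm'.
by rewrite r3 r4 addnS.
Qed.

Lemma lruA j m : 1 <= j -> j + m <= k ->
  run_faults (lru_step k) (rcons (iota 1 j.-1) 0) (pl (iota j m)) = m /\
  fin (lru_step k) (rcons (iota 1 j.-1) 0) (pl (iota j m)) = rcons (iota 1 (j + m).-1) 0.
Proof.
elim: m j => [|m IH] j hj hjm; first by rewrite addn0.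
have e1 : iota 1 j = rcons (iota 1 j.-1) j.
  exact: iota1_pred.
have st1 : lru_step k (rcons (iota 1 j.-1) 0) j = (rcons (rcons (iota 1 j.-1) 0) j, true).
  rewrite /lru_step mem_rcons in_cons mem_iota.
  have -> : (j == 0) || (1 <= j < 1 + j.-1) = false by move: hj; clear; lia.
  rewrite /fault_insert size_rcons size_iota.
  by have -> : j.-1.+1 < k by move: hjm hj; clear; lia.
have st2 : lru_step k (rcons (rcons (iota 1 j.-1) 0) j) 0 = (rcons (iota 1 j) 0, false).
  rewrite /lru_step mem_rcons in_cons mem_rcons mem_head orbT.
  rewrite -!cats1 -catA /= rem_mid ?e1 ?cats1 //.
  by rewrite mem_iota.
rewrite (_ : iota j m.+1 = j :: iota j.+1 m) // pl_cons run_cat /= st1 /= st2 /=.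
have hjm' : j.+1 + m <= k by move: hjm; clear; lia.
have [r3 r4] := IH j.+1 isT hjm'.
by rewrite r3 r4 addnS.
Qed.

Lemma lruB i : i <= k - 1 ->
  run_faults (lru_step k) (rcons (iota 1 (k-1)) 0) (pl (traject dec (k-1) i)) = 0 /\
  fin (lru_step k) (rcons (iota 1 (k-1)) 0) (pl (traject dec (k-1) i)) =
    rcons (iota 1 (k - 1 - i) ++ traject dec (k-1) i) 0.
Proof.
elim: i => [|i IH] hi; first by rewrite subn0 cats0.
have [r1 r2] := IH (ltnW hi).
set a := k - 1 - i.
have ha : 1 <= a by rewrite /a; move: hi; clear; lia.
set Tr := traject dec (k-1) i.
have ey : iter i dec (k - 1) = a.
  rewrite iter_dec; last by move: hi; clear; lia.
    by rewrite /a; case: ifP; move: hi hk; clear; lia.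
  by move: hk; clear; lia.
have hTr : 0 \notin Tr.
  apply/negP => /trajectP [i' hi']; rewrite iter_dec; first last.
  - by move: hi hi'; clear; lia.
  - by move: hk; clear; lia.
  by case: ifP; move: hi hi' hk; clear; lia.
have e1 : iota 1 a = iota 1 a.-1 ++ a :: [::] by rewrite cats1 iota1_pred.
have hA : a \notin iota 1 a.-1 by rewrite mem_iota; move: ha; clear; lia.
have h0A : 0 \notin iota 1 a.-1 by rewrite mem_iota.
have st1 : lru_step k (rcons (iota 1 a ++ Tr) 0) a =
    (rcons (rcons (iota 1 a.-1 ++ Tr) 0) a, false).
  rewrite /lru_step mem_rcons in_cons mem_cat e1 mem_cat mem_head orbT orbT.
  by rewrite -!cats1 -!catA /= rem_mid // -!catA.
have st2 : lru_step k (rcons (rcons (iota 1 a.-1 ++ Tr) 0) a) 0 =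
    (rcons (iota 1 a.-1 ++ rcons Tr a) 0, false).
  rewrite /lru_step mem_rcons in_cons mem_rcons mem_head orbT.
  rewrite -!cats1 -!catA /= catA rem_mid; first by rewrite -!catA.
  by rewrite mem_cat negb_or h0A.
rewrite trajectSr -[rcons (traject _ _ _) _]cats1 pl_cat run_cat r1 r2 ey /= st1 /= st2 /=.
rewrite fin_cat r2 /= st1 /= st2 /=.
have -> : k - 1 - i.+1 = a.-1 by rewrite /a; clear; lia.
by rewrite cats1.
Qed.

Lemma Ff_k : Ff k = iota 0 k.
Proof. by rewrite /Ff subnn. Qed.

Lemma dec_k : dec k = k - 1.
Proof. by rewrite /dec; case: eqP; move: hk; clear; lia. Qed.

Lemma W_k : W k = traject dec (k-1) (k-1).
Proof.
rewrite /W traject_map.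
have -> : iota 1 (k-1) = map (addn 1) (iota 0 (k-1)) by rewrite -iotaDl.
rewrite -map_comp; apply: eq_map => i /=.
by rewrite add0n -iterS iterSr dec_k.
Qed.

Definition leavesR R := iota 1 (k-1) ++ traject dec (k-1) (k-1) ++ traject dec k (R * (k * (k-1))).
Definition sR R := 0 :: pl (leavesR R).

Lemma fi0 : fault_insert k [::] 0 = [:: 0].
Proof. by rewrite /fault_insert /= (ltn_trans _ hk). Qed.

Lemma trajB_range y : y \in traject dec (k-1) (k-1) -> 0 < y < k.
Proof.
move=> /trajectP [i hi ->]; rewrite iter_dec; first last.
- by move: hi; clear; lia.
- by move: hk; clear; lia.
by case: ifP; move: hi hk; clear; lia.
Qed.

Lemma fifo_sR R : FIFO k (sR R) = k + R * k.+1.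
Proof.
rewrite /FIFO /sR run_cons.
have h0 : fifo_step k [::] 0 = (iota 0 1, true) by rewrite /fifo_step /= fi0.
rewrite h0 /leavesR !pl_cat !run_cat.
have h1k : 1 + (k - 1) <= k by move: hk; clear; lia.
have [r1 r2] := @fifoA 1 (k-1) isT h1k.
have e1 : 1 + (k - 1) = k by move: hk; clear; lia.
cbn [fst snd nat_of_bool]; rewrite e1 in r2; rewrite r1 r2 -Ff_k.
have hB : all (mem (Ff k)) (pl (traject dec (k-1) (k-1))).
  apply: all_pl; first by rewrite mem_Ff //; move: hk; clear; lia.
  apply/allP => y /trajB_range hy.
  by rewrite -[mem _ _]/(_ \in Ff k) mem_Ff //; move: hy; clear; lia.
have [r3 r4] := fifo_hits hB.
have [r5 _] := fifo_periods R.
rewrite r3 r4 r5 /=; move: hk; clear; lia.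
Qed.

Lemma lru_sR R : LRU k (sR R) = k + R * (k * (k-1)).
Proof.
rewrite /LRU /sR run_cons.
have h0 : lru_step k [::] 0 = (rcons (iota 1 (1.-1)) 0, true) by rewrite /lru_step /= fi0.
rewrite h0 /leavesR !pl_cat !run_cat.
have h1k : 1 + (k - 1) <= k by move: hk; clear; lia.
have [r1 r2] := @lruA 1 (k-1) isT h1k.
have e1 : (1 + (k - 1)).-1 = k - 1 by move: hk; clear; lia.
cbn [fst snd nat_of_bool]; rewrite e1 in r2; rewrite r1 r2.
have [r3 r4] := lruB (leqnn _).
rewrite r3 r4 subnn /= -W_k.
have hkk : 1 <= k <= k by move: hk; clear; lia.
have [r5 _] := lru_run (R * (k * (k-1))) hkk.
rewrite r5 /=; move: hk; clear; lia.
Qed.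

Lemma size_sR R : size (sR R) = 1 + 2 * ((k - 1) + (k - 1) + R * (k * (k-1))).
Proof. by rewrite /sR /= size_pl /leavesR !size_cat size_iota !size_traject addnA. Qed.

Lemma leavesR_range R : all (fun y => 0 < y <= k) (leavesR R).
Proof.
rewrite /leavesR !all_cat; apply/and3P; split.
- by apply/allP => y; rewrite mem_iota; move: hk; clear; lia.
- by apply/allP => y /trajB_range; clear; lia.
apply/allP => y /trajectP [i _ ->].
elim: i => [|i IH] /=; first by move: hk; clear; lia.
by rewrite -/(iter i dec k); apply: dec_range.
Qed.

End Up.

Import Order.TTheory GRing.Theory Num.Theory.

Lemma map_rem_inj (A B : eqType) (g : B -> A) (ginj : injective g) x (s : seq B) :
  rem (g x) (map g s) = map g (rem x s).
Proof.
elim: s => [|y s IH] //=; rewrite (inj_eq ginj); case: ifP => //= _; by rewrite IH.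
Qed.

Lemma fi_map (A B : eqType) (g : B -> A) k (c : seq B) x :
  fault_insert k (map g c) (g x) = map g (fault_insert k c x).
Proof.
by rewrite /fault_insert size_map; case: ifP => _; rewrite map_rcons ?behead_map.
Qed.

Lemma fifo_map (A B : eqType) (g : B -> A) (ginj : injective g) k (c s : seq B) :
  run_faults (fifo_step k) (map g c) (map g s) = run_faults (fifo_step k) c s.
Proof.
elim: s c => [|x s IH] c //=.
rewrite /fifo_step (mem_map ginj); case: ifP => _ /=; first by rewrite IH.
by rewrite fi_map IH.
Qed.

Lemma lru_map (A B : eqType) (g : B -> A) (ginj : injective g) k (c s : seq B) :
  run_faults (lru_step k) (map g c) (map g s) = run_faults (lru_step k) c s.
Proof.
elim: s c => [|x s IH] c //=.
rewrite /lru_step (mem_map ginj); case: ifP => _ /=.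
  by rewrite map_rem_inj // -map_rcons IH.
by rewrite fi_map IH.
Qed.

Lemma mem_pl y xs : y \in pl xs -> (y == 0) || (y \in xs).
Proof.
elim: xs => [|x xs IH] //=; rewrite !in_cons.
by case/orP => [->|/orP[->|/IH/orP[->|->]]]; rewrite ?orbT.
Qed.

Lemma path_pl N' xs : all (fun y => 0 < y < N'.+1) xs ->
  path (fun a b => (a == b) || star a b) (inord 0 : 'I_N'.+1) (map inord (pl xs)).
Proof.
have v0 : nat_of_ord (inord 0 : 'I_N'.+1) = 0 by rewrite inordK.
elim: xs => [|x xs IH] //= /andP[hx hxs].
have vx : nat_of_ord (inord x : 'I_N'.+1) = x by rewrite inordK //; case/andP: hx.
have ne : (inord 0 : 'I_N'.+1) != inord x.
  by apply/negP => /eqP /(congr1 (@nat_of_ord _)); rewrite v0 vx => e; move: hx; rewrite -e.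
have ne2 : (inord x : 'I_N'.+1) != inord 0 by rewrite eq_sym.
rewrite IH // andbT (negbTE ne) (negbTE ne2) /star ne ne2 /=.
by rewrite v0 !eqxx !orbT.
Qed.


Lemma lowerZ k N n : (1 < k)%N -> (0 < n)%N ->
  (- (((k-2)*n + 3*k)%N)%:Z <= (2*(k-1))%N%:Z * MinFL k N n)%R.
Proof.
move=> hk hn; rewrite /MinFL /fmin; case: pickP => [t0 Pt0 | _]; last first.
  by rewrite mulr0 oppr_le0.
case: arg_minP => // t Pt _.
have hs : size (val t) = n := size_tuple t.
move: Pt; rewrite /respects (_ : tval t = val t) //.
case e: (val t) hs => [|x s'] hs; first by exfalso; move: hn; rewrite -hs.
move=> Pt.
have iscU : forall a b : 'I_N, (val a == 0) -> (val b == 0) -> a = b.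
  by move=> a b /eqP ha /eqP hb; apply: val_inj; rewrite ha hb.
have := lower_seq (isc := fun y : 'I_N => val y == 0) hk iscU Pt.
rewrite hs mulrBr -!PoszM.
move: (2 * (k - 1) * LRU k (x :: s'))%N (2 * (k - 1) * FIFO k (x :: s'))%N
  ((k - 2) * n)%N => a b c h.
lia.
Qed.

Lemma upperZ k N' R : (1 < k)%N -> (k < N'.+1)%N ->
  (MinFL k N'.+1 (size (sR k R)) <= (R * k.+1)%N%:Z - (R * (k * (k-1)))%N%:Z)%R.
Proof.
move=> hk hN.
set s := map (@inord N') (sR k R).
have Hs : size s = size (sR k R) by rewrite size_map.
have rng : forall y, y \in sR k R -> (y < N'.+1)%N.
  move=> y; rewrite in_cons => /orP[/eqP->//|/mem_pl /orP[/eqP->//|]].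
  move=> hy; have := allP (leavesR_range hk R) y hy; move: hN; clear; lia.
have Ev : map val s = sR k R.
  rewrite /s -map_comp; rewrite -[RHS]map_id; apply/eq_in_map => y hy /=.
  by rewrite inordK // rng.
have Pt : respects (@star N'.+1) (in_tuple s).
  rewrite /respects /= /s /sR /=.
  apply: path_pl; apply/allP => y hy.
  have := allP (leavesR_range hk R) y hy; move: hN; clear; lia.
rewrite -Hs /MinFL /fmin.
case: pickP => [t0 Pt0 | H]; last by move: (H (in_tuple s)); rewrite Pt.
case: arg_minP => //= t _ Hm.
apply: (le_trans (Hm _ Pt)) => /=.
have eF : FIFO k s = FIFO k (sR k R).
  have h := fifo_map val_inj k [::] s; rewrite Ev in h.
  by rewrite /FIFO -h.
have eL : LRU k s = LRU k (sR k R).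
  have h := lru_map val_inj k [::] s; rewrite Ev in h.
  by rewrite /LRU -h.
rewrite eF eL fifo_sR // lru_sR //.
move: (R * k.+1)%N (R * (k * (k - 1)))%N => a b.
lia.
Qed.

Section RealAux.
Local Open Scope ring_scope.

Lemma real_low (R : realFieldType) (K n x e : R) : 2 <= K -> 0 < n -> 0 < e ->
  -((K-2)*n + 3*K) <= 2*(K-1)*x -> 3*K <= 2*(K-1)*e*n ->
  - (1/2) + 1/(2*(K-1)) - e <= x / n.
Proof.
move=> hK hn he h1 h2.
have hK1 : 0 < 2*(K-1) by lra.
rewrite ler_pdivlMr //.
rewrite -(ler_pM2r hK1).
have -> : (- (1 / 2) + 1 / (2 * (K - 1)) - e) * n * (2 * (K - 1)) =
   - (K-2)*n - 2*(K-1)*e*n.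
  by field; lra.
nra.
Qed.

Lemma real_up (R : realFieldType) (K r x e : R) : 2 <= K -> 0 <= r -> 0 < e ->
  x <= r*(K+1) - r*(K*(K-1)) -> 2*K <= e*r ->
  x / (1 + 2*((K-1)+(K-1)+r*(K*(K-1)))) <= - (1/2) + 1/(2*(K-1)) + 1/(2*K*(K-1)) + e.
Proof.
move=> hK hr he h1 h2.
have hKK : 2 <= K*(K-1) by nra.
have hrP : r * 2 <= r*(K*(K-1)) by rewrite ler_wpM2l.
set P := K*(K-1) in h1 hKK hrP *.
set n := 1 + _.
have hP : 0 < 2*P by lra.
have hn : 4*r <= n by rewrite /n; lra.
have hn0 : 0 < n by rewrite /n; lra.
rewrite ler_pdivrMr //.
rewrite -(ler_pM2r hP).
have -> : (- (1 / 2) + 1 / (2 * (K - 1)) + 1 / (2 * K * (K - 1)) + e) * n * (2 * P)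
   = (K + 1 - P) * n + 2*P*(e*n).
  by rewrite /P; field; lra.
have en : 2 * K <= e * n.
  by apply: (le_trans h2); rewrite ler_pM2l //; lra.
have hx : x * (2*P) <= (r*(K+1) - r*P) * (2*P) by rewrite ler_pM2r.
have e2 : (r*(K+1) - r*P) * (2*P) = (K+1-P)*n - (K+1)*(4*K-3) + P*(4*K-3) by rewrite /n; ring.
rewrite e2 in hx.
have hD : 0 <= (K+1) * (4*K-3) by apply: mulr_ge0; lra.
have h3 : (4*K-3) * P <= 2*P*(e*n).
  have : (4*K-3) <= 2*(e*n) by lra.
  move=> h; have hP0 : 0 <= P by lra.
  nra.
lra.
Qed.

Lemma lowR (R : realType) k n (X : int) : (1 < k)%N ->
  (- (((k-2)*n + 3*k)%N)%:Z <= (2*(k-1))%N%:Z * X)%R ->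
  -((k%:R - 2)*n%:R + 3*k%:R) <= 2*(k%:R-1)*(X%:~R : R).
Proof.
move=> hk h; have := h; rewrite -(ler_int R) rmorphN rmorphM /= -!pmulrn.
rewrite !natrD !natrM !natrB //; last by apply: ltnW.
by move=> h1; lra.
Qed.

Lemma upR (R : realType) k r (X : int) : (1 < k)%N ->
  (X <= (r * k.+1)%N%:Z - (r * (k * (k-1)))%N%:Z)%R ->
  (X%:~R : R) <= r%:R*(k%:R+1) - r%:R*(k%:R*(k%:R-1)).
Proof.
move=> hk h; have := h; rewrite -(ler_int R) rmorphB /= -!pmulrn.
by rewrite !natrM natrB ?(ltnW hk) // -addn1 natrD.
Qed.
End RealAux.

End PagingAux.
Import PagingAux.
Unset Implicit Arguments. Set Strict Implicit. Set Printing Implicit Defensive.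

Import Order.TTheory GRing.Theory Num.Theory.
Local Open Scope ring_scope.

Theorem lemma8 (R : realType) (k N : nat) :
  (2 <= k)%N -> (k.+1 <= N)%N ->
  let u := fun n : nat => (((MinFL k N n)%:~R / n%:R : R)%:E) in
  ((- (1 / 2) + 1 / (2 * (k%:R - 1)) : R)%:E <= limn_einf u)%E /\
  (limn_einf u <= (- (1 / 2) + 1 / (2 * (k%:R - 1))
                   + 1 / (2 * k%:R * (k%:R - 1)) : R)%:E)%E.
Proof.
move=> hk hN u.
have [N' eN] : exists N', N = N'.+1 by exists N.-1; move: hk hN; clear; lia.
subst N.
have hk1 : (1 < k)%N by move: hk; clear; lia.
have hN' : (k < N'.+1)%N by move: hN; clear; lia.
have hK : (2 : R) <= k%:R by rewrite (ler_nat R 2 k).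
split.
- apply/lee_subgt0Pr => e e0.
  rewrite limn_einf_lim; apply: lime_ge; first exact: is_cvg_einfs.
  set B := 3 * k%:R / (2 * (k%:R - 1) * e).
  have B0 : 0 <= B.
    by rewrite /B; apply: divr_ge0; [lra | apply: mulr_ge0; lra].
  have hB := archi_boundP B0.
  exists (Num.Def.archi_bound B).+1 => // n /= hn.
  apply: le_ereal_inf_tmp => _ [m /= hm <-].
  rewrite /u lee_fin.
  have hm0 : (0 < m)%N by move: hn hm; clear; lia.
  have hZ := lowR R hk1 (lowerZ N'.+1 hk1 hm0).
  apply: real_low => //.
  + by rewrite ltr0n.
  + have hmB : B < m%:R.
      apply: (lt_le_trans hB); rewrite ler_nat; move: hn hm; clear; lia.
    move: hmB; rewrite /B ltr_pdivrMr; last by apply: mulr_gt0; lra.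
    by move=> h1; nra.
- apply/lee_addgt0Pr => e e0.
  rewrite limn_einf_lim; apply: lime_le; first exact: is_cvg_einfs.
  set B := 2 * k%:R / e.
  have B0 : 0 <= B by rewrite /B; apply: divr_ge0; lra.
  have hB := archi_boundP B0.
  exists 0%N => // n _.
  set r := (n + Num.Def.archi_bound B)%N.
  set m := size (sR k r).
  have hnm : (n <= m)%N.
    have h1 : (r <= r * (k * (k - 1)))%N.
      by rewrite leq_pmulr // muln_gt0; move: hk; clear; lia.
    by rewrite /m size_sR; move: h1; rewrite /r; clear; lia.
  apply: le_trans; first by apply: ereal_inf_lbound; exists m.
  rewrite /u lee_fin.
  have hZ := upR R hk1 (upperZ r hk1 hN').
  have -> : (m%:R : R) = 1 + 2 * ((k%:R - 1) + (k%:R - 1) + r%:R * (k%:R * (k%:R - 1))).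
    have em : m = (1 + 2 * ((k - 1) + (k - 1) + r * (k * (k - 1))))%N.
      by rewrite /m size_sR.
    rewrite em natrD natrM !natrD !natrM natrB //; last by move: hk; clear; lia.
    by rewrite /r natrD.
  apply: real_up => //.
  have hrB : B < r%:R.
    apply: (lt_le_trans hB); rewrite ler_nat /r; clear; lia.
  move: hrB; rewrite /B ltr_pdivrMr // => h1.
  rewrite mulrC; lra.
Qed.
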